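(* Let $H$ be a graph, $r\ge\omega_0(H)$, and $n\ge1$. Let $x$ be a vertex in a part of $\mathrm{T}_r(n)$ of largest size and let $v$ be any vertex of $\mathrm{T}_r(n)$. Then the number of subgraphs of $\mathrm{T}_r(n)$ isomorphic to $H$ containing $v$ is at least the number containing $x$, and the latter equals $\mathcal{N}(H,\mathrm{T}_r(n))-\mathcal{N}(H,\mathrm{T}_r(n-1))$.
   Context: All graphs are finite and simple. $\mathcal{N}(H,G)$ is the number of (not necessarily induced) subgraphs of $G$ isomorphic to $H$. $\mathrm{T}_r(n)$ is the Turán graph: complete $r$-partite on $n$ vertices with part sizes $\lfloor n/r\rfloor$ or $\lceil n/r\rceil$ ($\mathrm{T}_r(0)$ is the empty graph). For a graph $J$, $\omega_0(J)$ is the least positive integer such that for every integer $r\ge\omega_0(J)$ and every $n\ge1$, every $n$-vertex $K_{r+1}$-free graph $G$ satisfies $\mathcal{N}(J,G)\le\mathcal{N}(J,\mathrm{T}_r(n))$ (it exists by a theorem of Morrison, Nir, Norin, Rzążewski and Wesolek). *)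

(* Defs.v *)
From mathcomp Require Import all_boot all_algebra.
Set Implicit Arguments. Unset Strict Implicit. Unset Printing Implicit Defensive.

Record sgraph := SGraph {
  vtx : finType;
  adj : rel vtx;
  adj_sym : symmetric adj;
  adj_irr : irreflexive adj }.

Definition subgraph_of (G : sgraph) (p : {set vtx G} * {set {set vtx G}}) : bool :=
  [forall e in p.2, [exists a : vtx G, exists b : vtx G,
     [&& a \in p.1, b \in p.1, @adj G a b & e == [set a; b]]]].

Definition iso_to (H G : sgraph) (p : {set vtx G} * {set {set vtx G}}) : bool :=
  [exists f : {ffun vtx H -> vtx G},
    [&& injectiveb f, (f @: setT) == p.1 &
        [forall u : vtx H, forall w : vtx H, @adj H u w == ([set f u; f w] \in p.2)]]].

Definition copies (H G : sgraph) : {set {set vtx G} * {set {set vtx G}}} :=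
  [set p | subgraph_of p && iso_to H p].

Definition Ncount (H G : sgraph) : nat := #|copies H G|.

Definition Ncount_at (H G : sgraph) (v : vtx G) : nat :=
  #|[set p in copies H G | v \in p.1]|.

Definition clique_free (k : nat) (G : sgraph) : bool :=
  ~~ [exists f : {ffun 'I_k -> vtx G},
        injectiveb f && [forall i, forall j, (i != j) ==> @adj G (f i) (f j)]].

(* Turán graph T_r(n): vertices 0..n-1, part of i is i mod r. *)
Definition turan_adj (r n : nat) : rel 'I_n := fun i j => (i %% r != j %% r).

Lemma turan_adj_sym (r n : nat) : symmetric (@turan_adj r n).
Proof. by move=> i j; rewrite /turan_adj eq_sym. Qed.

Lemma turan_adj_irr (r n : nat) : irreflexive (@turan_adj r n).
Proof. by move=> i; rewrite /turan_adj eqxx. Qed.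

Definition turan (r n : nat) : sgraph :=
  @SGraph (ordinal n) (@turan_adj r n) (@turan_adj_sym r n) (@turan_adj_irr r n).

Definition turan_part (r n : nat) (v : 'I_n) : {set 'I_n} :=
  [set u : 'I_n | u %% r == v %% r].

(* the defining property of omega_0 at threshold w *)
Definition turan_good (H : sgraph) (w : nat) : Prop :=
  forall r, w <= r -> forall n, 0 < n ->
  forall G : sgraph, #|vtx G| = n -> clique_free r.+1 G ->
    Ncount H G <= Ncount H (turan r n).

Definition is_omega0 (H : sgraph) (w : nat) : Prop :=
  [/\ 0 < w, turan_good H w &
      forall w', 0 < w' -> turan_good H w' -> w <= w'].

(* Main.v *)
Require Import Defs.
From mathcomp Require Import all_boot all_algebra.
Set Implicit Arguments. Unset Strict Implicit. Unset Printing Implicit Defensive.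

Definition Pmap (G G' : sgraph) (h : vtx G' -> vtx G)
  (p : {set vtx G'} * {set {set vtx G'}}) : {set vtx G} * {set {set vtx G}} :=
  (h @: p.1, [set (fun e : {set vtx G'} => h @: e) e | e in p.2]).

Lemma Pmap_inj (G G' : sgraph) (h : vtx G' -> vtx G) :
  injective h -> injective (Pmap h).
Proof.
move=> hi [a1 a2] [b1 b2] [] /(imset_inj hi) -> /(imset_inj (imset_inj hi)) -> //.
Qed.

Lemma Pmap_copies (H G G' : sgraph) (h : vtx G' -> vtx G) :
  injective h -> (forall u w, @adj G (h u) (h w) = @adj G' u w) ->
  forall p, p \in copies H G' -> Pmap h p \in copies H G.
Proof.
move=> hi ha [p1 p2]; rewrite /copies !inE /= => /andP [sg iso]; apply/andP; split.
  apply/forall_inP => e /imsetP [e0 e0in ->]. rewrite /subgraph_of /= in sg.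
  move/forall_inP: sg => /(_ e0 e0in) /existsP [a /existsP [b /and4P [ain bin ab /eqP ->]]].
  apply/existsP; exists (h a); apply/existsP; exists (h b).
  rewrite /= !(mem_imset _ _ hi) ha ab imsetU !imset_set1 eqxx. by rewrite ain bin.
rewrite /iso_to in iso *. case/existsP: iso => f /and3P [fi /eqP fim fe].
apply/existsP; exists [ffun u => h (f u)]; apply/and3P; split.
- apply/injectiveP => u w; rewrite !ffunE => /hi; exact: (injectiveP _ fi).
- apply/eqP; rewrite /= -[p1]fim -imset_comp; apply: eq_imset => u; by rewrite ffunE.
- apply/forallP => u; apply/forallP => w; rewrite !ffunE /=.
  have -> : [set h (f u); h (f w)] = h @: [set f u; f w] by rewrite imsetU !imset_set1.
  rewrite (mem_imset _ _ (imset_inj hi)).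
  by move/forallP: fe => /(_ u) /forallP /(_ w).
Qed.

Lemma Pmap_surj (H G G' : sgraph) (h : vtx G' -> vtx G) :
  injective h -> (forall u w, @adj G (h u) (h w) = @adj G' u w) ->
  forall p, p \in copies H G -> (forall a, a \in p.1 -> a \in codom h) ->
  exists2 p', p' \in copies H G' & Pmap h p' = p.
Proof.
move=> hi ha [p1 p2]; rewrite /copies !inE /= => /andP [sg iso] hc.
have sgE : forall e, e \in p2 -> exists a', exists b',
    [/\ h a' \in p1, h b' \in p1, adj a' b' & e = h @: [set a'; b']].
  move=> e ein; move/forall_inP: sg => /(_ e ein) /existsP [a /existsP [b /and4P [ain bin ab /eqP ->]]].
  case/codomP: (hc a ain) => a' ea; case/codomP: (hc b bin) => b' eb.
  subst a b; rewrite ha in ab; exists a', b'; split => //.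
  by rewrite imsetU !imset_set1.
exists (h @^-1: p1, [set e : {set vtx G'} | h @: e \in p2]); last first.
  rewrite /Pmap /=; congr pair.
    apply/setP => a; apply/imsetP/idP => [[a' ]|ain]; first by rewrite inE => ? ->.
    by case/codomP: (hc a ain) => a' ea; exists a'; rewrite // inE -ea.
  apply/setP => e; apply/imsetP/idP => [[e' ]|ein]; first by rewrite inE => ? ->.
  case: (sgE e ein) => a' [b' [_ _ _ ee]]; exists [set a'; b'] => //.
  by rewrite inE -ee.
rewrite /copies inE; apply/andP; split.
  apply/forall_inP => e; rewrite inE => /sgE [a' [b' [ain bin ab ee]]].
  apply/existsP; exists a'; apply/existsP; exists b'.
  by rewrite !inE ain bin ab (imset_inj hi ee) eqxx.
rewrite /iso_to in iso *; case/existsP: iso => f /and3P [fi /eqP fim fe].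
have Hc : forall u, f u \in codom h.
  by move=> u; apply: hc; rewrite -[p1]fim; apply: imset_f.
pose g := [ffun u => iinv (Hc u)].
have hg : forall u, h (g u) = f u by move=> u; rewrite ffunE f_iinv.
apply/existsP; exists g; apply/and3P; split.
- apply/injectiveP => u w e; apply: (injectiveP _ fi); by rewrite -!hg e.
- apply/eqP/setP => a'; rewrite inE /=; apply/imsetP/idP => [[u _ ->]|].
    by rewrite hg -[p1]fim imset_f.
  rewrite -[p1]fim => /imsetP [u _ e]; exists u => //; apply: hi; by rewrite hg.
- apply/forallP => u; apply/forallP => w; rewrite inE imsetU !imset_set1 !hg.
  by move/forallP: fe => /(_ u) /forallP /(_ w).
Qed.

Lemma delete_vertex (H G G' : sgraph) (h : vtx G' -> vtx G) (v : vtx G) :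
  injective h -> (forall u w, @adj G (h u) (h w) = @adj G' u w) ->
  (forall u, h u != v) -> #|vtx G'|.+1 = #|vtx G| ->
  Ncount H G = Ncount H G' + @Ncount_at H G v.
Proof.
move=> hi ha hv hcard.
have range : forall a, a != v -> a \in codom h.
  have : h @: setT == [set~ v].
    rewrite eqEcard cardsC1 card_imset // cardsT -hcard /= leqnn andbT.
    by apply/subsetP => a /imsetP [u _ ->]; rewrite !inE hv.
  move/eqP/setP => e a av; have : a \in [set~ v] by rewrite !inE.
  by rewrite -e => /imsetP [u _ ->]; apply: codom_f.
rewrite /Ncount /Ncount_at -(cardsID [set p : {set vtx G} * {set {set vtx G}} | v \in p.1] (copies H G)) addnC.
congr addn; last by apply: eq_card => p; rewrite !inE.
have -> : copies H G :\: [set p : {set vtx G} * {set {set vtx G}} | v \in p.1] = Pmap h @: copies H G'.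
  apply/setP => p; rewrite !inE; apply/andP/imsetP.
    case=> pv pc; case: (@Pmap_surj H _ _ _ hi ha p) => [|a ain|q qc e]; first by rewrite inE.
      by apply: range; apply: contraNneq pv => <-.
    by exists q.
  case=> p' p'c ->; split; last by have := Pmap_copies hi ha p'c; rewrite inE.
  by apply/imsetP => [[u _ /eqP]]; rewrite eq_sym (negbTE (hv u)).
by rewrite card_imset //; apply: Pmap_inj.
Qed.

Lemma clique_free_sub (k : nat) (G G' : sgraph) (h : vtx G' -> vtx G) :
  injective h -> (forall u w, @adj G (h u) (h w) = @adj G' u w) ->
  clique_free k G -> clique_free k G'.
Proof.
move=> hi ha; apply: contra => /existsP [f /andP [fi fc]].
apply/existsP; exists [ffun i => h (f i)]; apply/andP; split.
  apply/injectiveP => i j; rewrite !ffunE => /hi; exact: (injectiveP _ fi).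
apply/forallP => i; apply/forallP => j; rewrite !ffunE ha.
by move/forallP: fc => /(_ i) /forallP /(_ j).
Qed.

Lemma turan_clique_free (r n : nat) : 0 < r -> clique_free r.+1 (turan r n).
Proof.
move=> r0; apply/negP => /existsP [f /andP [fi fc]].
pose g := fun i : 'I_r.+1 => Ordinal (ltn_pmod (f i) r0).
have : injective g.
  move=> i j /(congr1 val) /= e; apply/eqP; apply/negPn/negP => ij.
  by move/forallP: fc => /(_ i) /forallP /(_ j); rewrite ij /= /turan_adj e eqxx.
by move/leq_card; rewrite !card_ord ltnn.
Qed.

Definition del_adj (G : sgraph) (v : vtx G) : rel {u : vtx G | u != v} :=
  fun a b => @adj G (val a) (val b).
Lemma del_adj_sym (G : sgraph) (v : vtx G) : symmetric (@del_adj G v).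
Proof. move=> a b; exact: adj_sym. Qed.
Lemma del_adj_irr (G : sgraph) (v : vtx G) : irreflexive (@del_adj G v).
Proof. move=> a; exact: adj_irr. Qed.
Definition del_graph (G : sgraph) (v : vtx G) : sgraph :=
  @SGraph {u : vtx G | u != v} (@del_adj G v) (@del_adj_sym G v) (@del_adj_irr G v).

Lemma del_graph_card (G : sgraph) (v : vtx G) : #|vtx (del_graph v)|.+1 = #|vtx G|.
Proof.
rewrite /= card_sig [in RHS](cardD1 v) inE add1n; congr S.
by apply: eq_card => u; rewrite !inE andbT.
Qed.

Definition sw (c d b : nat) := if b == c then d else if b == d then c else b.
Definition tau (r c d k : nat) := k %/ r * r + sw c d (k %% r).

Lemma sw_lt r c d b : c < r -> d < r -> b < r -> sw c d b < r.
Proof. by move=> ? ? ?; rewrite /sw; do 2?case: ifP. Qed.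

Lemma swK c d : involutive (sw c d).
Proof.
move=> b; rewrite /sw.
case: (eqVneq b c) => [->|bc]; first by rewrite eqxx; case: eqVneq.
case: (eqVneq b d) => [->|bd]; first by rewrite eqxx.
by rewrite (negbTE bc) (negbTE bd).
Qed.

Lemma tau_mod r c d k : c < r -> d < r -> tau r c d k %% r = sw c d (k %% r).
Proof.
move=> cr dr; have r0 : 0 < r by apply: leq_ltn_trans cr.
by rewrite /tau modnMDl modn_small // sw_lt // ltn_pmod.
Qed.

Lemma tau_div r c d k : c < r -> d < r -> tau r c d k %/ r = k %/ r.
Proof.
move=> cr dr; have r0 : 0 < r by apply: leq_ltn_trans cr.
by rewrite /tau divnMDl // (divn_small (sw_lt cr dr (ltn_pmod k r0))) addn0.
Qed.

Lemma tau_inj r c d : c < r -> d < r -> injective (tau r c d).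
Proof.
move=> cr dr k l e.
rewrite (divn_eq k r) (divn_eq l r) -(tau_div _ cr dr) -(tau_div l cr dr) e.
congr addn; apply: (can_inj (swK c d)); by rewrite -!tau_mod // e.
Qed.

Lemma tau_le r c d k n : c < r -> d < r -> c <= d -> d = n %% r -> k <= n ->
  tau r c d k <= n.
Proof.
move=> cr dr cd dn kn; rewrite /tau /sw.
case: eqP => kc.
  rewrite [leqRHS](divn_eq n r) -dn leq_add2r leq_mul2r leq_div2r //; by rewrite orbT.
case: eqP => kd.
  by apply: leq_trans kn; rewrite [leqRHS](divn_eq k r) leq_add2l kd.
by rewrite -divn_eq.
Qed.

Lemma embed (r n' : nat) (x : 'I_n'.+1) : 0 < r -> x %% r <= n' %% r ->
  exists h : 'I_n' -> 'I_n'.+1, [/\ injective h,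
    forall u w, @turan_adj r n'.+1 (h u) (h w) = @turan_adj r n' u w &
    forall u, h u != x].
Proof.
move=> r0 cd.
set c := x %% r in cd; set d := n' %% r in cd.
have cr : c < r by rewrite ltn_pmod. have dr : d < r by rewrite ltn_pmod.
set y := x %/ r * r + d.
have ymod : y %% r = d by rewrite /y modnMDl modn_small.
have tauy : tau r c d y = x.
  rewrite /tau ymod /y divnMDl // (divn_small dr) addn0 [in RHS](divn_eq x r); congr addn.
  by rewrite /sw; case: eqP => // _; rewrite eqxx.
pose kk (u : nat) := if u == y then n' else u.
have kkle : forall u : 'I_n', kk u <= n'.
  by move=> u; rewrite /kk; case: ifP => // _; apply: ltnW.
have hb : forall u : 'I_n', tau r c d (kk u) < n'.+1.
  by move=> u; rewrite ltnS; apply: tau_le => //; apply: kkle.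
have kkmod : forall u : 'I_n', kk u %% r = u %% r.
  by move=> u; rewrite /kk; case: eqP => // ->; rewrite ymod.
exists (fun u => Ordinal (hb u)); split.
- move=> u w /(congr1 val) /= /(tau_inj cr dr); rewrite /kk.
  case: eqP => uy; case: eqP => wy.
  + by move=> _; apply: val_inj; rewrite /= uy wy.
  + by move=> e; have := ltn_ord w; rewrite -e ltnn.
  + by move=> e; have := ltn_ord u; rewrite e ltnn.
  + by move=> e; apply: val_inj.
- move=> u w; rewrite /turan_adj /= !tau_mod // !kkmod.
  by rewrite (inj_eq (can_inj (swK c d))).
- move=> u; apply/eqP => /(congr1 val) /=; rewrite -tauy => /(tau_inj cr dr).
  rewrite /kk; case: eqP => [uy e|uy //].
  by have := ltn_ord u; rewrite uy -e ltnn.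
Qed.

Lemma part_max (r n' : nat) (x : 'I_n'.+1) : 0 < r ->
  #|turan_part r (@ord_max n')| <= #|turan_part r x| -> x %% r <= n' %% r.
Proof.
move=> r0 hx; rewrite leqNgt; apply/negP => dc.
set c := x %% r in dc; set d := n' %% r in dc.
have dr : d < r by rewrite ltn_pmod.
have small : forall u : 'I_n'.+1, u %% r = c -> u %/ r * r + d < u.
  by move=> u uc; rewrite [ltnRHS](divn_eq u r) ltn_add2l uc.
pose g (u : 'I_n'.+1) : 'I_n'.+1 := inord (u %/ r * r + d).
have gv : forall u : 'I_n'.+1, u %% r = c -> (g u : nat) = u %/ r * r + d.
  move=> u uc; rewrite inordK //; apply: leq_trans (small u uc) _.
  exact: ltnW (ltn_ord u).
have gi : {in turan_part r x &, injective g}.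
  move=> u w; rewrite !inE => /eqP uc /eqP wc /(congr1 (@nat_of_ord _)); rewrite (gv u uc) (gv w wc).
  move/(congr1 (divn^~ r)); rewrite !divnMDl // !(divn_small dr) !addn0 => e.
  by apply: val_inj; rewrite /= (divn_eq u r) (divn_eq w r) e uc wc.
have sub : g @: turan_part r x \subset turan_part r ord_max :\ ord_max.
  apply/subsetP => a /imsetP [u]; rewrite inE => /eqP uc ->.
  rewrite !inE; apply/andP; split.
    apply/negP => /eqP /(congr1 (@nat_of_ord _)); rewrite (gv u uc) /= => e.
    by have := small u uc; rewrite e ltnNge -ltnS ltn_ord.
  by rewrite gv // modnMDl modn_small.
have := subset_leq_card sub; rewrite card_in_imset //.
move=> h1; move: hx; rewrite (cardsD1 ord_max (turan_part r ord_max)) inE eqxx add1n => h2.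
by have := leq_trans h2 h1; rewrite ltnn.
Qed.

From mathcomp Require Import zify.

Theorem mainTheorem13 (H : sgraph) (r n : nat)
  (hr : exists w, is_omega0 H w /\ w <= r) (hn : 0 < n)
  (x v : 'I_n)
  (hx : forall u : 'I_n, #|turan_part r u| <= #|turan_part r x|) :
  @Ncount_at H (turan r n) x <= @Ncount_at H (turan r n) v /\
  ((Ncount_at H (x : vtx (turan r n)))%:Z =
     (Ncount H (turan r n))%:Z - (Ncount H (turan r n.-1))%:Z)%R.
Proof.
case: n hn x v hx => // n' _ x v hx.
case: hr => w [[w0 good _] wr].
have r0 : 0 < r := leq_trans w0 wr.
have cd := part_max r0 (hx ord_max).
case: (embed r0 cd) => h [hi ha hxv].
have E1 : Ncount H (turan r n'.+1) =
    Ncount H (turan r n') + @Ncount_at H (turan r n'.+1) x.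
  by apply: (@delete_vertex H (turan r n'.+1) (turan r n') h x hi ha hxv);
    rewrite /= !card_ord.
split; last first.
  by rewrite /= E1 PoszD GRing.addrAC GRing.subrr GRing.add0r.
case: n' x v hx E1 {h hi ha hxv cd} => [|n'] x v hx E1.
  by rewrite (ord1 x) (ord1 v).
pose Gv := @del_graph (turan r n'.+2) v.
have E2 : Ncount H (turan r n'.+2) = Ncount H Gv + @Ncount_at H (turan r n'.+2) v.
  apply: (@delete_vertex H (turan r n'.+2) Gv val) => //.
  - exact: val_inj.
  - by move=> u; exact: valP u.
  - exact: del_graph_card.
have cGv : #|vtx Gv| = n'.+1.
  by have := @del_graph_card (turan r n'.+2) v; rewrite /= card_ord; case.
have cf : clique_free r.+1 Gv.
  apply: (@clique_free_sub _ (turan r n'.+2) Gv val) => //.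
  - exact: val_inj.
  - exact: turan_clique_free.
have := good r wr n'.+1 (ltn0Sn _) Gv cGv cf.
move: E1 E2; rewrite /=; lia.
Qed.
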